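(* Let $X$ be a compact metric space and $f\colon X\to X$ continuous. If $(X,f)$ has any one of the following properties, then it has property $P_e$: (1) two-sided limit shadowing; (2) two-sided orbital limit shadowing; (3) $\delta$-restricted two-sided orbital limit shadowing.
   Context: A full trajectory is a sequence $\langle x_i\rangle_{i\in\mathbb Z}$ in $X$ with $f(x_i)=x_{i+1}$ for all $i$. For a two-sided sequence, $\omega(\langle x_i\rangle)=\bigcap_{M\in\mathbb N}\overline{\{x_n:n>M\}}$, $\alpha(\langle x_i\rangle)=\bigcap_{M\in\mathbb N}\overline{\{x_n:n<-M\}}$. $ICT_f$ is the set of nonempty closed internally chain transitive sets, where $A$ is internally chain transitive if for all $a,b\in A$ and $\delta>0$ there exist $x_0=a,\dots,x_N=b$ in $A$, $N\ge1$, with $d(f(x_i),x_{i+1})<\delta$. Property $P_e$: for every $A\in ICT_f$ there is a full trajectory $\langle x_i\rangle$ with $\alpha(\langle x_i\rangle)=\omega(\langle x_i\rangle)=A$. A two-sided asymptotic pseudo-orbit is $\langle x_i\rangle_{i\in\mathbb Z}$ with $d(f(x_i),x_{i+1})\to0$ as $i\to\pm\infty$; it is a two-sided asymptotic $\delta$-pseudo-orbit if moreover $d(f(x_i),x_{i+1})<\delta$ for all $i\in\mathbb Z$. Two-sided limit shadowing: every two-sided asymptotic pseudo-orbit $\langle x_i\rangle$ admits a full trajectory $\langle z_i\rangle$ with $d(z_i,x_i)\to0$ as $i\to\pm\infty$. Two-sided orbital limit shadowing: every two-sided asymptotic pseudo-orbit $\langle x_i\rangle$ admits a full trajectory $\langle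 z_i\rangle$ with $\alpha(\langle z_i\rangle)=\alpha(\langle x_i\rangle)$ and $\omega(\langle z_i\rangle)=\omega(\langle x_i\rangle)$. $\delta$-restricted two-sided orbital limit shadowing: there exists $\delta>0$ such that every two-sided asymptotic $\delta$-pseudo-orbit $\langle x_i\rangle$ admits a full trajectory $\langle z_i\rangle$ with $\alpha(\langle z_i\rangle)=\alpha(\langle x_i\rangle)$ and $\omega(\langle z_i\rangle)=\omega(\langle x_i\rangle)$. *)

(* Defs.v *)
(* A metric space X is a (Hausdorff) pseudoMetricType
   over a realType R; d(x,y) < e is expressed as ball x e y. *)
From HB Require Import structures.
From mathcomp Require Import all_boot all_order all_algebra.
From mathcomp Require Import all_classical all_reals all_analysis.
Set Implicit Arguments. Unset Strict Implicit. Unset Printing Implicit Defensive.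
Import Order.TTheory GRing.Theory Num.Theory.
Local Open Scope classical_set_scope.
Local Open Scope ring_scope.

Section Dyn.
Context {R : realType} {X : pseudoMetricType R}.

Definition full_trajectory (f : X -> X) (x : int -> X) : Prop :=
  forall i : int, f (x i) = x (i + 1).

Definition omega_lim (x : int -> X) : set X :=
  [set y | forall M : nat, closure [set x n | n in [set n : int | M%:Z < n]] y].

Definition alpha_lim (x : int -> X) : set X :=
  [set y | forall M : nat, closure [set x n | n in [set n : int | n < - M%:Z]] y].

Definition ICT (f : X -> X) (A : set X) : Prop :=
  forall a b, A a -> A b -> forall delta : R, 0 < delta ->
    exists (N : nat) (c : nat -> X), (1 <= N)%N /\ c 0%N = a /\ c N = b /\
      (forall i : nat, (i <= N)%N -> A (c i)) /\
      (forall i : nat, (i < N)%N -> ball (f (c i)) delta (c i.+1)).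

Definition ICT_set (f : X -> X) (A : set X) : Prop :=
  A !=set0 /\ closed A /\ ICT f A.

Definition property_Pe (f : X -> X) : Prop :=
  forall A, ICT_set f A ->
    exists x : int -> X, full_trajectory f x /\ alpha_lim x = A /\ omega_lim x = A.

Definition two_sided_asym_pseudo_orbit (f : X -> X) (x : int -> X) : Prop :=
  forall e : R, 0 < e -> exists N : nat, forall i : int,
    N%:Z < `|i| -> ball (f (x i)) e (x (i + 1)).

Definition two_sided_asym_delta_pseudo_orbit (f : X -> X) (delta : R)
    (x : int -> X) : Prop :=
  two_sided_asym_pseudo_orbit f x /\
  forall i : int, ball (f (x i)) delta (x (i + 1)).

Definition two_sided_limit_shadowing (f : X -> X) : Prop :=
  forall x : int -> X, two_sided_asym_pseudo_orbit f x ->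
    exists z : int -> X, full_trajectory f z /\
      forall e : R, 0 < e -> exists N : nat, forall i : int,
        N%:Z < `|i| -> ball (z i) e (x i).

Definition two_sided_orbital_limit_shadowing (f : X -> X) : Prop :=
  forall x : int -> X, two_sided_asym_pseudo_orbit f x ->
    exists z : int -> X, full_trajectory f z /\
      alpha_lim z = alpha_lim x /\ omega_lim z = omega_lim x.

Definition restricted_two_sided_orbital_limit_shadowing (f : X -> X) : Prop :=
  exists delta : R, 0 < delta /\
    forall x : int -> X, two_sided_asym_delta_pseudo_orbit f delta x ->
      exists z : int -> X, full_trajectory f z /\
        alpha_lim z = alpha_lim x /\ omega_lim z = omega_lim x.

End Dyn.

(* Main.v *)
Require Import Defs.
From HB Require Import structures.
From mathcomp Require Import all_boot all_order all_algebra.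
From mathcomp Require Import all_classical all_reals all_analysis.
From mathcomp Require Import zify.
Set Implicit Arguments. Unset Strict Implicit. Unset Printing Implicit Defensive.
Import Order.TTheory GRing.Theory Num.Theory.
Local Open Scope classical_set_scope.
Local Open Scope ring_scope.

Section State.
Variable N : nat -> nat.
Hypothesis hN : forall k, (1 <= N k)%N.

Definition step (s : nat * nat) : nat * nat :=
  if (s.2.+1 < N s.1)%N then (s.1, s.2.+1) else (s.1.+1, 0%N).
Fixpoint st (n : nat) : nat * nat :=
  match n with 0%N => (0%N, 0%N) | m.+1 => step (st m) end.

Lemma st_inv n : ((st n).2 < N (st n).1)%N.
Proof.
elim: n => [|n IH] /=; first exact: hN.
rewrite /step; case: ifP => //= _; exact: hN.
Qed.

Lemma st_mono1 n : ((st n).1 <= (st n.+1).1)%N.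
Proof. by rewrite /= /step; case: ifP => //= _; lia. Qed.

Lemma st_mono n m : (n <= m)%N -> ((st n).1 <= (st m).1)%N.
Proof.
move=> /subnKC <-; elim: (m - n)%N => [|d IH]; first by rewrite addn0.
rewrite addnS; exact: leq_trans IH (st_mono1 _).
Qed.

Lemma st_run n k : st n = (k, 0%N) -> forall j, (j < N k)%N -> st (n + j)%N = (k, j).
Proof.
move=> E; elim=> [|j IH] Hj; first by rewrite addn0.
rewrite addnS /= IH; last lia.
by rewrite /step /= Hj.
Qed.

Lemma st_next n k : st n = (k, 0%N) -> st (n + N k)%N = (k.+1, 0%N).
Proof.
move=> E; have := hN k; case Nk: (N k) => [|m] // _.
rewrite addnS /= (st_run E (j := m)); last lia.
by rewrite /step /= Nk ltnn.
Qed.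

Lemma st_reach k : exists n, st n = (k, 0%N).
Proof.
elim: k => [|k [n E]]; first by exists 0%N.
by exists (n + N k)%N; apply: st_next.
Qed.

Lemma st_unb K : exists n0, forall n, (n0 <= n)%N -> (K <= (st n).1)%N.
Proof.
have [n0 E] := st_reach K; exists n0 => n Hn.
by have := st_mono Hn; rewrite E.
Qed.

End State.

Section Main.
Context {R : realType} {X : pseudoMetricType R} (f : X -> X).

Definition chainP (A : set X) (e : R) (N : nat) (c : nat -> X) :=
  (forall i, (i <= N)%N -> A (c i)) /\
  (forall i, (i < N)%N -> ball (f (c i)) e (c i.+1)).

Lemma concat_chain A e N1 c1 N2 c2 : chainP A e N1 c1 -> chainP A e N2 c2 ->
  c1 N1 = c2 0%N ->
  exists c, chainP A e (N1 + N2) c /\ c 0%N = c1 0%N /\ c (N1 + N2)%N = c2 N2 /\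
   (forall i, (i <= N1)%N -> c i = c1 i) /\
   (forall i, (i <= N2)%N -> c (N1 + i)%N = c2 i).
Proof.
move=> [A1 C1] [A2 C2] E.
pose c i := if (i <= N1)%N then c1 i else c2 (i - N1)%N.
have cL i : (i <= N1)%N -> c i = c1 i by rewrite /c => ->.
have cR i : (N1 <= i)%N -> c i = c2 (i - N1)%N.
  rewrite /c => H; case: ifP => H2; last done.
  have -> : i = N1 by lia.
  by rewrite subnn.
exists c; split; [split|].
- move=> i Hi; case: (leqP i N1) => H.
  + by rewrite cL //; apply: A1.
  + rewrite cR; last lia. by apply: A2; lia.
- move=> i Hi; case: (ltnP i N1) => H.
  + by rewrite !cL; try lia; apply: C1.
  + rewrite !cR; [|lia|lia]. have -> : (i.+1 - N1 = (i - N1).+1)%N by lia.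
    by apply: C2; lia.
split; first by rewrite cL.
split; first by rewrite cR ?addKn //; lia.
split; first exact: cL.
by move=> i Hi; rewrite cR ?addKn //; lia.
Qed.


Lemma ICT_chain A e a b : ICT f A -> A a -> A b -> 0 < e ->
  exists N c, (1 <= N)%N /\ chainP A e N c /\ c 0%N = a /\ c N = b.
Proof.
move=> HA Aa Ab e0; have [N [c [N1 [c0 [cN [cA cC]]]]]] := HA a b Aa Ab e e0.
by exists N, c.
Qed.

Lemma loop_visit A e p : ICT f A -> A p -> 0 < e -> forall s : seq X,
  (forall a, a \in s -> A a) ->
  exists N c, (1 <= N)%N /\ chainP A e N c /\ c 0%N = p /\ c N = p /\
    forall a, a \in s -> exists2 i, (i <= N)%N & c i = a.
Proof.
move=> HA Ap e0; elim=> [|a s IH] sA.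
  have [N [c [N1 [cc [c0 cN]]]]] := ICT_chain HA Ap Ap e0.
  by exists N, c; do 4 split => //.
have Aa : A a by apply: sA; rewrite mem_head.
have [|N1 [c1 [N11 [cc1 [c10 [c1N c1V]]]]]] := IH.
  by move=> b bs; apply: sA; rewrite in_cons bs orbT.
have [N2 [c2 [N21 [cc2 [c20 c2N]]]]] := ICT_chain HA Ap Aa e0.
have [N3 [c3 [N31 [cc3 [c30 c3N]]]]] := ICT_chain HA Aa Ap e0.
have [|c12 [cc12 [c120 [c12N [c12L c12R]]]]] := concat_chain cc1 cc2.
  by rewrite c1N c20.
have [|c [cc [c0 [cN [cL cR]]]]] := concat_chain cc12 cc3.
  by rewrite c12N c2N c30.
exists (N1 + N2 + N3)%N, c; split; first lia.
split => //; split; first by rewrite c0 c120.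
split; first by rewrite cN.
move=> b; rewrite in_cons => /orP [/eqP ->|bs].
  exists (N1 + N2)%N; first lia.
  by rewrite cL // c12N.
have [i iN <-] := c1V b bs.
exists i; first lia.
by rewrite cL ?c12L //; lia.
Qed.


Lemma net (A : set X) (e : R) : compact A -> 0 < e ->
  exists s : seq X, (forall a, a \in s -> A a) /\
    forall b, A b -> exists2 a, a \in s & ball a e b.
Proof.
move=> cA e0; case: (pselect (exists s : seq X, (forall a, a \in s -> A a) /\
    forall b, A b -> exists2 a, a \in s & ball a e b)) => // H.
pose D := [set s : seq X | forall a, a \in s -> A a].
pose B := fun s : seq X => [set b | A b /\ ~ (exists2 a, a \in s & ball a e b)].
have FF : Filter (filter_from D B).
  apply: filter_from_filter; first by exists [::].
  move=> i j Di Dj; exists (i ++ j).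
    by move=> a; rewrite mem_cat => /orP [/Di|/Dj].
  move=> b [Ab nU]; split; split => // -[a aS ab]; apply: nU; exists a => //;
    by rewrite mem_cat aS ?orbT.
have PF : ProperFilter (filter_from D B).
  apply: filter_from_proper => s sD.
  case: (pselect (B s !=set0)) => // Hn; exfalso; apply: H; exists s; split => //.
  move=> b Ab; apply: contrapT => nU; apply: Hn; exists b; split => //.
have [|p [Ap Hcl]] := cA _ PF.
  by exists [::] => // b [].
have HF : filter_from D B (B [:: p]).
  exists [:: p] => // a; rewrite inE => /eqP ->; exact: Ap.
have [q [[_ nU] pq]] := Hcl (B [:: p]) (ball p e) HF (nbhsx_ballx p e e0).
by exfalso; apply: nU; exists p => //; rewrite mem_head.
Qed.


Section Seqs.
Variables (A : set X) (p : X) (eps : nat -> R) (N : nat -> nat) (c : nat -> nat -> X).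
Hypothesis hN : forall k, (1 <= N k)%N.
Hypothesis hc : forall k, chainP A (eps k) (N k) (c k).
Hypothesis hc0 : forall k, c k 0%N = p.
Hypothesis hcN : forall k, c k (N k) = p.

Definition yseq n := c (st N n).1 (st N n).2.
Definition wseq n := c (st N n).1 (N (st N n).1 - (st N n).2.+1)%N.

Lemma yseq_step n : ball (f (yseq n)) (eps (st N n).1) (yseq n.+1).
Proof.
rewrite /yseq /=; have := st_inv hN n.
case: (st N n) => k j /= Hj; rewrite /step /=.
case: ifP => /= H; first by apply: (hc k).2.
rewrite hc0 -(hcN k); have := (hc k).2 j Hj. by have -> : j.+1 = N k by lia.
Qed.

Lemma wseq_step n : ball (f (wseq n.+1)) (eps (st N n.+1).1) (wseq n).
Proof.
rewrite /wseq /=; have := st_inv hN n.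
case: (st N n) => k j /= Hj; rewrite /step /=.
case: ifP => /= H.
  have := (hc k).2 (N k - j.+2)%N ltac:(lia).
  by have -> : (N k - j.+2).+1 = (N k - j.+1)%N by lia.
have -> : (N k - j.+1 = 0)%N by lia.
rewrite hc0 -(hcN k.+1); have := (hc k.+1).2 (N k.+1 - 1)%N.
have := hN k.+1; set m := N k.+1 => Hm.
have -> : (m - 1).+1 = m by lia.
apply; lia.
Qed.

Lemma wseq_y0 : ball (f (wseq 0)) (eps 0) (yseq 0).
Proof.
rewrite /wseq /yseq /= hc0 -(hcN 0).
have := (hc 0).2 (N 0 - 1)%N; have := hN 0; set m := N 0 => Hm.
have -> : (m - 1).+1 = m by lia.
apply; lia.
Qed.

Lemma yseqA n : A (yseq n).
Proof. rewrite /yseq; apply: (hc _).1; have := st_inv hN n; lia. Qed.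

Lemma wseqA n : A (wseq n).
Proof. rewrite /wseq; apply: (hc _).1; lia. Qed.

Lemma yseq_visit k i : (i <= N k)%N -> exists m, (st N m).1 = k /\ yseq m = c k i.
Proof.
move=> Hi; have [n E] := st_reach hN k.
case: (ltnP i (N k)) => H.
  exists (n + i)%N; rewrite /yseq (st_run E H) /=; by [].
exists n; rewrite /yseq E /= hc0; split => //.
by have -> : i = N k by lia.
Qed.

Lemma wseq_visit k i : (i <= N k)%N -> exists m, (st N m).1 = k /\ wseq m = c k i.
Proof.
move=> Hi; have [n E] := st_reach hN k.
case: (ltnP i (N k)) => H.
  have H2 : (N k - i.+1 < N k)%N by lia.
  exists (n + (N k - i.+1))%N; rewrite /wseq (st_run E H2) /=; split => //.
  by have -> : (N k - (N k - i.+1).+1 = i)%N by lia.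
have H2 : (N k - 1 < N k)%N by have := hN k; lia.
exists (n + (N k - 1))%N; rewrite /wseq (st_run E H2) /=; split => //.
have -> : (N k - (N k - 1).+1 = 0)%N by have := hN k; lia.
rewrite hc0 -(hcN k); by have -> : i = N k by lia.
Qed.

End Seqs.

Lemma eps_small (d e : R) : 0 < e -> exists K, forall k, (K <= k)%N ->
  Num.min d (k.+1%:R^-1) < e.
Proof.
move=> e0; exists (Num.trunc e^-1) => k Hk.
rewrite gt_min; apply/orP; right.
rewrite invf_plt ?posrE ?ltr0Sn //.
apply: lt_le_trans (truncnS_gt _) _; by rewrite ler_nat ltnS.
Qed.

Definition xseq (y w : nat -> X) (i : int) : X :=
  match i with Posz n => y n | Negz m => w m end.

Lemma xseq_pos y w n : xseq y w (Posz n + 1) = y n.+1.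
Proof. by have -> : (Posz n + 1 = Posz n.+1)%R by lia. Qed.
Lemma xseq_neg0 y w : xseq y w (Negz 0 + 1) = y 0%N.
Proof. by have -> : (Negz 0 + 1 = Posz 0)%R by lia. Qed.
Lemma xseq_negS y w m : xseq y w (Negz m.+1 + 1) = w m.
Proof. by have -> : (Negz m.+1 + 1 = Negz m)%R by lia. Qed.

Lemma construct (A : set X) (d : R) : compact A -> closed A -> A !=set0 ->
  ICT f A -> 0 < d ->
  exists x : int -> X, two_sided_asym_delta_pseudo_orbit f d x /\
    alpha_lim x = A /\ omega_lim x = A.
Proof.
move=> cA clA [p Ap] HA d0.
pose eps k := Num.min d (k.+1%:R^-1).
have eps0 k : 0 < eps k by rewrite lt_min d0 invr_gt0 ltr0Sn.
have epsd k : eps k <= d by rewrite ge_min lexx.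
have H k : exists Nc : nat * (nat -> X), (1 <= Nc.1)%N /\
    chainP A (eps k) Nc.1 Nc.2 /\ Nc.2 0%N = p /\ Nc.2 Nc.1 = p /\
    forall b, A b -> exists2 i, (i <= Nc.1)%N & ball (Nc.2 i) (eps k) b.
  have [s [sA snet]] := net cA (eps0 k).
  have [Nk [ck [N1 [cc [c0 [cN cV]]]]]] := loop_visit HA Ap (eps0 k) sA.
  exists (Nk, ck); split => //; split => //; split => //; split => // b Ab.
  have [a aS ab] := snet b Ab; have [i iN ci] := cV a aS.
  by exists i => //=; rewrite ci.
have [g Hg] := choice H.
pose N k := (g k).1; pose c k := (g k).2.
have hN k : (1 <= N k)%N by case: (Hg k).
have hc k : chainP A (eps k) (N k) (c k) by case: (Hg k) => _ [].
have hc0 k : c k 0%N = p by case: (Hg k) => _ [_ []].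
have hcN k : c k (N k) = p by case: (Hg k) => _ [_ [_ []]].
have hV k b : A b -> exists2 i, (i <= N k)%N & ball (c k i) (eps k) b.
  by case: (Hg k) => _ [_ [_ [_]]]; apply.
pose y := yseq N c; pose w := wseq N c.
exists (xseq y w).
have hy := yseq_step hN hc hc0 hcN.
have hw := wseq_step hN hc hc0 hcN.
have hw0 := wseq_y0 hN hc hc0 hcN.
have yA := yseqA hN hc.
have wA := wseqA hc.
split; [split|split].
- move=> e e0; have [K HK] := eps_small d e0; have [n0 Hn0] := st_unb hN K.
  exists n0.+1 => -[n|m] Hi.
  + rewrite xseq_pos /=; apply: (le_ball _ (hy n)); apply/ltW/HK/Hn0; lia.
  + case: m Hi => [|m] Hi; first by exfalso; lia.
    rewrite xseq_negS /=; apply: (le_ball _ (hw m)); apply/ltW/HK/Hn0; lia.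
- move=> -[n|[|m]].
  + rewrite xseq_pos; exact: (le_ball (epsd _) (hy n)).
  + rewrite xseq_neg0; exact: (le_ball (epsd _) hw0).
  + rewrite xseq_negS; exact: (le_ball (epsd _) (hw m)).
- apply/seteqP; split.
  + move=> b /(_ 0%N) Hb; apply: clA; apply: (closureS _ Hb) => z [i _ <-].
    by case: i => n; [exact: yA| exact: wA].
  + move=> b Ab M B /nbhs_ballP [ep ep0 HB].
    have [K HK] := eps_small d ep0.
    pose k := maxn K (st N M).1.+1.
    have [i iN ci] := hV k b Ab.
    have [m [mk wm]] := wseq_visit hN hc0 hcN iN.
    have mM : (M < m)%N.
      rewrite ltnNge; apply/negP => Hm; have := @st_mono N _ _ Hm; rewrite mk; lia.
    exists (w m); split; first by exists (Negz m) => //=; lia.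
    have Hk : (K <= k)%N by lia.
    apply: HB; apply: (le_ball (ltW (HK k Hk))).
    by apply: ball_sym; rewrite /w wm.
- apply/seteqP; split.
  + move=> b /(_ 0%N) Hb; apply: clA; apply: (closureS _ Hb) => z [i _ <-].
    by case: i => n; [exact: yA| exact: wA].
  + move=> b Ab M B /nbhs_ballP [ep ep0 HB].
    have [K HK] := eps_small d ep0.
    pose k := maxn K (st N M).1.+1.
    have [i iN ci] := hV k b Ab.
    have [m [mk wm]] := yseq_visit hN hc0 hcN iN.
    have mM : (M < m)%N.
      rewrite ltnNge; apply/negP => Hm; have := @st_mono N _ _ Hm; rewrite mk; lia.
    exists (y m); split; first by exists (Posz m) => //=; lia.
    have Hk : (K <= k)%N by lia.
    apply: HB; apply: (le_ball (ltW (HK k Hk))).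
    by apply: ball_sym; rewrite /y wm.
Qed.

Lemma omega_close (z x : int -> X) :
  (forall e : R, 0 < e -> exists N : nat, forall i : int,
    (N%:Z < `|i|)%R -> ball (z i) e (x i)) ->
  omega_lim x `<=` omega_lim z.
Proof.
move=> H b Hb M B /nbhs_ballP [ep ep0 HB].
have ep2 : 0 < ep / 2 by rewrite divr_gt0.
have [N HN] := H _ ep2.
have [_ [[n Hn <-] bx]] := Hb (maxn M N) (ball b (ep / 2)) (nbhsx_ballx b _ ep2).
exists (z n); split; first by exists n => //=; move: Hn => /=; lia.
apply: HB; rewrite [ep]splitr; apply: ball_triangle bx _.
apply: ball_sym; apply: HN; move: Hn => /=; lia.
Qed.

Lemma alpha_close (z x : int -> X) :
  (forall e : R, 0 < e -> exists N : nat, forall i : int,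
    (N%:Z < `|i|)%R -> ball (z i) e (x i)) ->
  alpha_lim x `<=` alpha_lim z.
Proof.
move=> H b Hb M B /nbhs_ballP [ep ep0 HB].
have ep2 : 0 < ep / 2 by rewrite divr_gt0.
have [N HN] := H _ ep2.
have [_ [[n Hn <-] bx]] := Hb (maxn M N) (ball b (ep / 2)) (nbhsx_ballx b _ ep2).
exists (z n); split; first by exists n => //=; move: Hn => /=; lia.
apply: HB; rewrite [ep]splitr; apply: ball_triangle bx _.
apply: ball_sym; apply: HN; move: Hn => /=; lia.
Qed.

End Main.

Theorem mainTheorem2 (R : realType) (X : pseudoMetricType R) (f : X -> X) :
  hausdorff_space X -> compact [set: X] -> continuous f ->
  (two_sided_limit_shadowing f \/ two_sided_orbital_limit_shadowing f \/
   restricted_two_sided_orbital_limit_shadowing f) ->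
  property_Pe f.
Proof.
move=> _ cX _ Hsh A [[p Ap] [clA HA]].
have cA : compact A := subclosed_compact clA cX (fun _ _ => I).
have A0 : A !=set0 by exists p.
case: Hsh => [H1 | [H2 | [d [d0 H3]]]].
- have [x [[Hx _] [ax ox]]] := construct cA clA A0 HA ltr01.
  have [z [tz Hz]] := H1 x Hx.
  have Hz' : forall e : R, 0 < e -> exists N : nat, forall i : int,
      (N%:Z < `|i|)%R -> ball (x i) e (z i).
    move=> e e0; have [N HN] := Hz e e0; exists N => i Hi; exact/ball_sym/HN.
  exists z; split => //; split.
  + rewrite -ax; apply/seteqP; split; [exact: alpha_close | exact: alpha_close].
  + rewrite -ox; apply/seteqP; split; [exact: omega_close | exact: omega_close].
- have [x [[Hx _] [ax ox]]] := construct cA clA A0 HA ltr01.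
  have [z [tz [az oz]]] := H2 x Hx.
  by exists z; rewrite az oz.
- have [x [Hx [ax ox]]] := construct cA clA A0 HA d0.
  have [z [tz [az oz]]] := H3 x Hx.
  by exists z; rewrite az oz.
Qed.
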